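(* Let $A_1,\dots,A_L$ be independent adjacency matrices generated by a multi-layer SBM (as in the context) satisfying $\frac{\log(L+n)}{pnL^{1/2}}\lesssim\rho\lesssim\frac{1}{pn}$, and let $\tilde A_l$ be the sparsified matrices with sampling probability $p$. Then the following hold simultaneously with probability larger than $1-O((L+n)^{-c})$ for some positive constant $c$: (i) $\max_{l,i}\tilde d_{l,i}\lesssim\log(L+n)$; (ii) $\max_i\sum_{l=1}^L\tilde d_{l,i}\lesssim Ln\rho p$; (iii) $\big\|\sum_{l=1}^L\tilde A_l^2\big\|_2\lesssim Ln\rho/p$.
   Context: Multi-layer SBM: each node $i\in[n]$ has a label $g_i\in[K]$ ($K$ fixed); for each layer $l$, $B_l=\rho B_{l,0}\in[0,1]^{K\times K}$ is symmetric with $B_{l,0}$ having nonnegative entries bounded by an absolute constant. $A_l\in\{0,1\}^{n\times n}$ is symmetric with $A_{l,ii}=0$ and $A_{l,ij}$ ($i<j$) independent $\mathrm{Bernoulli}(B_{l,g_ig_j})$. Sparsification with probability $p\in(0,1]$: for each $l$ and pair $i<j$, independently, with probability $p$ set $\tilde A_{l,ij}=A_{l,ij}/p$, otherwise $0$; $\tilde A_{l,ji}=\tilde A_{l,ij}$, $\tilde A_{l,ii}=0$. $\tilde d_{l,i}=\#\{j:\tilde A_{l,ij}=1/p\}$. $\|\cdot\|_2$ is the spectral norm; $f\lesssim g$ means $f\le cg$ for a constant $c>0$ independent of $n,L,p,\rho$. *)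

(* Defs.v *)
From HB Require Import structures.
From mathcomp Require Import all_boot all_order all_algebra.
From mathcomp Require Import all_classical all_reals all_analysis.
Set Implicit Arguments. Unset Strict Implicit. Unset Printing Implicit Defensive.
Import Order.TTheory GRing.Theory Num.Theory.
Local Open Scope classical_set_scope.
Local Open Scope ring_scope.

(* Sample space of the multi-layer SBM + sparsification: for each layer l and
   each ordered triple (l,i,j) a pair (edge bit A_{l,ij}, sampling bit).
   Only triples with i < j are random; the others are a point mass at
   (false,false) and are never read. *)
Definition Omega (L n : nat) := {ffun 'I_L * 'I_n * 'I_n -> bool * bool}.

Definition bern (R : ringType) (q : R) (b : bool) : R := if b then q else 1 - q.

Definition sbm_weight (R : realType) (L n K : nat) (g : 'I_n -> 'I_K)
    (B : 'I_L -> 'M[R]_K) (p : R) (w : Omega L n) : R :=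
  \prod_(t : 'I_L * 'I_n * 'I_n)
     (if (t.1.2 < t.2)%N
      then bern (B t.1.1 (g t.1.2) (g t.2)) (w t).1 * bern p (w t).2
      else ((~~ (w t).1) && ~~ (w t).2)%:R).

Definition sbm_prob (R : realType) (L n K : nat) (g : 'I_n -> 'I_K)
    (B : 'I_L -> 'M[R]_K) (p : R) (E : Omega L n -> bool) : R :=
  \sum_(w : Omega L n) sbm_weight g B p w * (E w)%:R.

Definition adjA (L n : nat) (w : Omega L n) (l : 'I_L) (i j : 'I_n) : bool :=
  if (i < j)%N then (w (l, i, j)).1
  else if (j < i)%N then (w (l, j, i)).1 else false.

Definition maskS (L n : nat) (w : Omega L n) (l : 'I_L) (i j : 'I_n) : bool :=
  if (i < j)%N then (w (l, i, j)).2
  else if (j < i)%N then (w (l, j, i)).2 else false.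

Definition Amat (R : ringType) (L n : nat) (w : Omega L n) (l : 'I_L) : 'M[R]_n :=
  \matrix_(i, j) (adjA w l i j)%:R.

Definition Atilde (R : realType) (L n : nat) (p : R) (w : Omega L n) (l : 'I_L)
  : 'M[R]_n :=
  \matrix_(i, j) (if (i != j) && maskS w l i j then Amat R w l i j / p else 0).

Definition dtilde (R : realType) (L n : nat) (p : R) (w : Omega L n)
  (l : 'I_L) (i : 'I_n) : nat :=
  #|[set j : 'I_n | Atilde p w l i j == p^-1]|.

Definition vnorm (R : realType) (n : nat) (x : 'cV[R]_n) : R :=
  Num.sqrt (\sum_i x i 0 ^+ 2).

Definition spec_norm (R : realType) (n : nat) (A : 'M[R]_n) : R :=
  sup [set vnorm (A *m x) | x in [set x : 'cV[R]_n | vnorm x <= 1]].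

(* Main.v *)
Require Import Defs.
From HB Require Import structures.
From mathcomp Require Import all_boot all_order all_algebra.
From mathcomp Require Import all_classical all_reals all_analysis.
From mathcomp Require Import ring lra.
Set Implicit Arguments. Unset Strict Implicit. Unset Printing Implicit Defensive.
Import Order.TTheory GRing.Theory Num.Theory.
Local Open Scope ring_scope.


Section Cond.
Variables (R : realType) (T X : finType) (x0 : X) (om : T -> X -> R).
Hypothesis om_ge0 : forall t x, 0 <= om t x.
Hypothesis om_sum1 : forall t, \sum_x om t x = 1.

Lemma W_sum1 : \sum_(w : {ffun T -> X}) \prod_t om t (w t) = 1.
Proof. by rewrite -bigA_distr_bigA /= big1 // => t _; apply: om_sum1. Qed.

Lemma cond_bound (A : pred T) (Psi : {ffun T -> X} -> R)
  (kap : T -> {ffun T -> X} -> R) (h : T -> X -> R) (beta : R) :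
  (forall w : {ffun T -> X}, 0 <= Psi w) ->
  (forall w w' : {ffun T -> X}, (forall t, A t -> w t = w' t) ->
       Psi w = Psi w' /\ forall t, kap t w = kap t w') ->
  (forall w : {ffun T -> X}, Psi w * \prod_(t | ~~ A t) (\sum_x om t x * expR (kap t w * h t x)) <= beta) ->
  \sum_(w : {ffun T -> X}) (\prod_t om t (w t)) *
       (Psi w * expR (\sum_(t | ~~ A t) kap t w * h t (w t))) <= beta.
Proof.
move=> Psi0 Hdep Hb.
have b0 : 0 <= beta.
  apply: le_trans (Hb [ffun=> x0]); apply: mulr_ge0 => //.
  apply: prodr_ge0 => t _; apply: sumr_ge0 => x _; apply: mulr_ge0 => //.
pose r (w : {ffun T -> X}) := [ffun t => if A t then w t else x0].
pose n t x := if A t then om t x else (x == x0)%:R.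
have n0 : forall t x, 0 <= n t x by move=> t x; rewrite /n; case: (A t).
rewrite (partition_big r xpredT) //=.
have -> : beta = \sum_(a : {ffun T -> X}) beta * \prod_t n t (a t).
  rewrite -mulr_sumr -bigA_distr_bigA /= big1 ?mulr1 // => t _.
  rewrite /n; case: (A t); first exact: om_sum1.
  by rewrite (bigD1 x0) //= eqxx big1 ?addr0 // => x /negbTE ->.
apply: ler_sum => a _.
case: (boolP (r a == a)) => [/eqP ca | nca]; last first.
  rewrite big1; first by apply: mulr_ge0 => //; apply: prodr_ge0.
  move=> w /eqP rwa; case/negP: nca; rewrite -rwa; apply/eqP/ffunP => t.
  by rewrite !ffunE; case: (A t).
have aA : forall t, ~~ A t -> a t = x0.
  by move=> t nAt; rewrite -ca ffunE (negbTE nAt).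
pose m t x := if A t then (x == a t)%:R * om t x
              else om t x * expR (kap t a * h t x).
have E1 : \sum_(w | r w == a) (\prod_t om t (w t)) *
       (Psi w * expR (\sum_(t | ~~ A t) kap t w * h t (w t)))
     = Psi a * \sum_(w : {ffun T -> X}) \prod_t m t (w t).
  rewrite mulr_sumr [in RHS](bigID (fun w => r w == a)) /=.
  rewrite [X in _ = _ + X]big1 ?addr0 => [|w nw]; last first.
    case: (pickP (fun t => A t && (w t != a t))) => [t /andP[At wa] | Hn]; last first.
      case/negP: nw.
      apply/eqP/ffunP => t; rewrite ffunE; case: ifP => At.
        by move: (Hn t); rewrite At /= => /negbFE /eqP.
      by rewrite aA // At.
    by rewrite (bigD1 t) //= {1}/m At (negbTE wa) !mul0r mulr0.
  apply: eq_bigr => w /eqP rwa.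
  have agree : forall t, A t -> w t = a t by move=> t At; rewrite -rwa ffunE At.
  have [-> Hk] := Hdep w a agree.
  rewrite expR_sum (bigID A) /= [in RHS](bigID A) /=.
  rewrite [X in _ = Psi a * (X * _)](eq_bigr (fun t => om t (w t))) => [|t At];
    last by rewrite /m At agree // eqxx mul1r.
  rewrite [X in _ = Psi a * (_ * X)](eq_bigr (fun t => om t (w t) * expR (kap t a * h t (w t)))) => [|t nAt];
    last by rewrite /m (negbTE nAt).
  rewrite big_split /=.
  rewrite [X in _ = _ * (_ * (_ * X))](eq_bigr (fun i => expR (kap i w * h i (w i)))); last by move=> t _; rewrite Hk.
  ring.
rewrite E1 -bigA_distr_bigA /= (bigID A) /=.
rewrite (eq_bigr (fun t => om t (a t))) => [|t At]; last first.
  rewrite /m At (bigD1 (a t)) //= eqxx mul1r big1 ?addr0 // => x /negbTE ->.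
  by rewrite mul0r.
rewrite [X in _ <= _ * X](bigID A) /=.
rewrite [X in _ <= _ * (_ * X)]big1 => [|t nAt]; last by rewrite /n (negbTE nAt) aA // eqxx.
rewrite mulr1 [X in _ <= _ * X](eq_bigr (fun t => om t (a t))) => [|t At]; last by rewrite /n At.
rewrite mulrCA mulrC ler_wpM2r //; first by apply: prodr_ge0.
apply: le_trans (Hb a); rewrite le_eqVlt; apply/orP; left; apply/eqP; congr (_ * _).
by apply: eq_bigr => t nAt; rewrite /m (negbTE nAt).
Qed.
End Cond.

Lemma sum_bool2 (R : realType) (F : bool * bool -> R) :
  \sum_(x : bool * bool) F x = F (true, true) + F (true, false) + F (false, true) + F (false, false).
Proof.
rewrite (eq_bigr (fun x => F (x.1, x.2))); last by case.
by rewrite -(pair_bigA _ (fun a b => F (a, b))) /= !big_bool /= addrA.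
Qed.

Lemma sum_pair3 (R : realType) (L n : nat) (F : 'I_L * 'I_n * 'I_n -> R) :
  \sum_(t : 'I_L * 'I_n * 'I_n) F t = \sum_l \sum_x \sum_y F (l, x, y).
Proof.
rewrite (eq_bigr (fun t => F (t.1, t.2))); last by case.
rewrite -(pair_bigA _ (fun a b => F (a, b))) /=.
rewrite (eq_bigr (fun a => \sum_y F ((a.1, a.2), y))); last by case.
by rewrite -(pair_bigA _ (fun a b => \sum_y F ((a, b), y))).
Qed.

Lemma sym_sum (R : realType) (n : nat) (G Z : 'I_n -> 'I_n -> R) :
  \sum_(k : 'I_n) \sum_(j : 'I_n) G k j * (if (k < j)%N then Z k j else if (j < k)%N then Z j k else 0)
  = \sum_(x : 'I_n) \sum_(y : 'I_n) (x < y)%N%:R * (G x y + G y x) * Z x y.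
Proof.
have E : forall k j : 'I_n, (if (k < j)%N then Z k j else if (j < k)%N then Z j k else 0)
   = (k < j)%N%:R * Z k j + (j < k)%N%:R * Z j k.
  move=> k j; case: ltnP => kj; first by rewrite (leq_gtF (ltnW kj)) mul1r mul0r addr0.
  by case: ltnP => jk; rewrite ?mul0r ?mul1r ?add0r ?addr0.
under eq_bigr do under eq_bigr do rewrite E mulrDr.
rewrite (eq_bigr (fun k => \sum_j G k j * ((k < j)%N%:R * Z k j) + \sum_j G k j * ((j < k)%N%:R * Z j k))); last by move=> k _; rewrite big_split.
rewrite big_split /= [X in _ + X]exchange_big /= -big_split /=.
apply: eq_bigr => x _; rewrite -big_split /=; apply: eq_bigr => y _.
ring.
Qed.

Lemma expR_ge1' (R : realType) (x : R) : 0 <= x -> 1 <= expR x.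
Proof. by move=> x0; apply: le_trans (expR_ge1Dx x); rewrite lerDl. Qed.

Section Model.
Variables (R : realType) (L n K : nat) (g : 'I_n -> 'I_K) (Bm : 'I_L -> 'M[R]_K) (p : R).
Local Notation T := ('I_L * 'I_n * 'I_n)%type.

Definition valid (t : T) := (t.1.2 < t.2)%N.
Definition om (t : T) (x : bool * bool) : R :=
  if valid t then bern (Bm t.1.1 (g t.1.2) (g t.2)) x.1 * bern p x.2
  else ((~~ x.1) && ~~ x.2)%:R.
Definition Y (x : bool * bool) : R := (x.1 && x.2)%:R.
Definition qv (t : T) : R := if valid t then Bm t.1.1 (g t.1.2) (g t.2) * p else 0.

Lemma weightE (w : Omega L n) : sbm_weight g Bm p w = \prod_t om t (w t).
Proof. by []. Qed.

Lemma om_sum1 t : \sum_x om t x = 1.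
Proof.
rewrite sum_bool2 /om; case: (valid t) => /=; last by rewrite !add0r.
ring.
Qed.

Lemma Et_eq t k : \sum_x om t x * expR (k * Y x) = 1 + qv t * (expR k - 1).
Proof.
rewrite sum_bool2 /om /qv /Y; case: (valid t) => /=; last first.
  by rewrite !mul0r !add0r mulr0 expR0 mulr1 addr0.
rewrite /bern /= mulr1 mulr0 expR0; ring.
Qed.

Hypothesis Bm01 : forall l a b, 0 <= Bm l a b <= 1.
Hypothesis p01 : 0 <= p <= 1.

Lemma om_ge0 t x : 0 <= om t x.
Proof.
rewrite /om; case: (valid t) => //; apply: mulr_ge0; rewrite /bern.
  by case: ifP => _; case/andP: (Bm01 t.1.1 (g t.1.2) (g t.2)) => // _ h; rewrite subr_ge0.
by case: ifP => _; case/andP: p01 => // _ h; rewrite subr_ge0.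
Qed.

Lemma qv_ge0 t : 0 <= qv t.
Proof.
rewrite /qv; case: (valid t) => //; apply: mulr_ge0.
  by case/andP: (Bm01 t.1.1 (g t.1.2) (g t.2)).
by case/andP: p01.
Qed.

Lemma prod_Et_le (S : pred T) (kf : T -> R) : (forall t, 0 <= kf t) ->
  \prod_(t | S t) (1 + qv t * (expR (kf t) - 1)) <= expR (\sum_(t | S t) qv t * (expR (kf t) - 1)).
Proof.
move=> k0; rewrite expR_sum; apply: ler_prod => t _; rewrite expR_ge1Dx andbT.
apply: addr_ge0 => //; apply: mulr_ge0; first exact: qv_ge0.
by rewrite subr_ge0 expR_ge1'.
Qed.

End Model.

Section Ident.
Variables (R : realType) (L n : nat).
Local Notation T := ('I_L * 'I_n * 'I_n)%type.

Definition e (w : Omega L n) l (i j : 'I_n) : bool := adjA w l i j && maskS w l i j.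

Lemma eE (w : Omega L n) l i j : (e w l i j)%:R =
  if (i < j)%N then Y R (w (l, i, j)) else if (j < i)%N then Y R (w (l, j, i)) else 0.
Proof. by rewrite /e /adjA /maskS /Y; case: ifP => _ //; case: ifP. Qed.

Lemma e_diag (w : Omega L n) l i : e w l i i = false.
Proof. by rewrite /e /adjA ltnn. Qed.

Lemma sum1n : \sum_(j : 'I_n) (1 : R) = n%:R.
Proof. by rewrite sumr_const card_ord. Qed.

Definition dd (w : Omega L n) l i : R := \sum_j (e w l i j)%:R.
Definition cl l i (t : T) : R := ((t.1.1 == l) && valid t && ((t.1.2 == i) || (t.2 == i)))%:R.
Definition ci i (t : T) : R := (valid t && ((t.1.2 == i) || (t.2 == i)))%:R.
Definition DD (w : Omega L n) i : R := \sum_l dd w l i.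
Definition Afn i (t : T) : bool := (t.1.2 == i) || (t.2 == i).
Definition kap i (t : T) (w : Omega L n) : R :=
  (valid t)%:R * ((e w t.1.1 i t.1.2)%:R + (e w t.1.1 i t.2)%:R).
Definition SS (w : Omega L n) i : R :=
  \sum_l \sum_k \sum_j (e w l i k)%:R * (e w l k j)%:R.
Definition TT (w : Omega L n) i : R := \sum_(t | ~~ Afn i t) kap i t w * Y R (w t).

Lemma ddE w l i : dd w l i = \sum_t cl l i t * Y R (w t).
Proof.
rewrite /dd.
have -> : \sum_j (e w l i j)%:R = \sum_(k : 'I_n) \sum_(j : 'I_n) (k == i)%:R *
   (if (k < j)%N then Y R (w (l, k, j)) else if (j < k)%N then Y R (w (l, j, k)) else 0).
  rewrite [RHS](bigD1 i) //= [X in _ = _ + X]big1 ?addr0.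
    by apply: eq_bigr => j _; rewrite eqxx mul1r eE.
  by move=> k /negbTE ->; apply: big1 => j _; rewrite mul0r.
rewrite sym_sum sum_pair3 [RHS](bigD1 l) //= [X in _ = _ + X]big1 ?addr0 => [|l' nl]; last first.
  by apply: big1 => x _; apply: big1 => y _; rewrite /cl /= (negbTE nl) mul0r.
apply: eq_bigr => x _; apply: eq_bigr => y _.
rewrite /cl /valid /= eqxx /=; case: (ltnP x y) => xy /=; last by rewrite !mul0r.
rewrite mul1r; case: (eqVneq x i) => [xi | xi]; case: (eqVneq y i) => [yi | yi] //=.
- by move: xy; rewrite xi yi ltnn.
- by rewrite addr0.
- by rewrite add0r.
- by rewrite addr0.
Qed.

Lemma DDE w i : DD w i = \sum_t ci i t * Y R (w t).
Proof.
rewrite /DD; under eq_bigr do rewrite ddE.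
rewrite exchange_big; apply: eq_bigr => t _; rewrite -mulr_suml; congr (_ * _).
rewrite (bigD1 t.1.1) //= big1 ?addr0; first by rewrite /cl /ci eqxx.
by move=> l nl; rewrite /cl (eq_sym t.1.1) (negbTE nl).
Qed.

Lemma e_dep (w w' : Omega L n) i : (forall t, Afn i t -> w t = w' t) ->
  forall l k, e w l i k = e w' l i k.
Proof.
move=> H l k; rewrite /e /adjA /maskS; case: ifP => ik.
  by rewrite (H (l, i, k)) // /Afn eqxx.
by case: ifP => ki //; rewrite (H (l, k, i)) // /Afn /= eqxx orbT.
Qed.

Lemma DD_dep (w w' : Omega L n) i : (forall t, Afn i t -> w t = w' t) -> DD w i = DD w' i.
Proof.
by move=> H; apply: eq_bigr => l _; apply: eq_bigr => j _; rewrite (e_dep H).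
Qed.

Lemma kap_dep (w w' : Omega L n) i : (forall t, Afn i t -> w t = w' t) ->
  forall t, kap i t w = kap i t w'.
Proof. by move=> H t; rewrite /kap !(e_dep H). Qed.

Lemma Y_ge0 x : 0 <= Y R x.
Proof. by rewrite /Y. Qed.

Lemma dd_le w l i : dd w l i <= n%:R.
Proof.
rewrite /dd -sum1n; apply: ler_sum => j _; by case: (e w l i j).
Qed.

Lemma dd_ge0 w l i : 0 <= dd w l i.
Proof. by apply: sumr_ge0 => j _. Qed.

Lemma DD_le w i : DD w i <= L%:R * n%:R.
Proof.
rewrite /DD; apply: le_trans (_ : \sum_(l : 'I_L) (n%:R : R) <= _).
  by apply: ler_sum => l _; apply: dd_le.
by rewrite sumr_const card_ord mulr_natl.
Qed.

Definition w1 : Omega L n := [ffun => (true, true)].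

Lemma sum_cl l i : \sum_t cl l i t <= n%:R.
Proof.
apply: le_trans (dd_le w1 l i); rewrite ddE le_eqVlt; apply/orP; left; apply/eqP.
by apply: eq_bigr => t _; rewrite /Y ffunE /= mulr1.
Qed.

Lemma sum_ci i : \sum_t ci i t <= L%:R * n%:R.
Proof.
apply: le_trans (DD_le w1 i); rewrite DDE le_eqVlt; apply/orP; left; apply/eqP.
by apply: eq_bigr => t _; rewrite /Y ffunE /= mulr1.
Qed.

Lemma SSE w i : SS w i = \sum_t kap i t w * Y R (w t).
Proof.
rewrite /SS sum_pair3; apply: eq_bigr => l _.
have -> : \sum_k \sum_j (e w l i k)%:R * (e w l k j)%:R = \sum_(k : 'I_n) \sum_(j : 'I_n)
   (e w l i k)%:R * (if (k < j)%N then Y R (w (l, k, j)) else if (j < k)%N then Y R (w (l, j, k)) else 0).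
  by apply: eq_bigr => k _; apply: eq_bigr => j _; rewrite (eE w l k j).
rewrite sym_sum; apply: eq_bigr => x _; apply: eq_bigr => y _.
by rewrite /kap /valid /=.
Qed.

Lemma SS_le w i : SS w i <= DD w i + TT w i.
Proof.
rewrite SSE DDE (bigID (Afn i)) /= [X in _ <= X + _](bigID (Afn i)) /=.
rewrite [X in _ <= _ + X + _]big1 ?addr0 => [|t nA]; last by move: nA; rewrite /ci /Afn => /negbTE ->; rewrite andbF mul0r.
rewrite lerD2r; apply: ler_sum => t At; apply: ler_wpM2r; first exact: Y_ge0.
move: (At); rewrite /kap /ci /Afn => ->; rewrite andbT; case: (valid t); rewrite ?mul0r // mul1r.
move: At; rewrite /Afn; case/orP => /eqP ->; rewrite e_diag ?add0r ?addr0; by case: (e _ _ _ _).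
Qed.

Lemma sum_kap_le w i : \sum_(t | ~~ Afn i t) kap i t w <= n%:R * DD w i.
Proof.
rewrite big_mkcond /= sum_pair3 /DD mulr_sumr; apply: ler_sum => l _.
have -> : \sum_x \sum_y (if ~~ Afn i (l, x, y) then kap i (l, x, y) w else 0)
   = \sum_(x : 'I_n) \sum_(y : 'I_n) (x < y)%N%:R * ((e w l i x)%:R + (e w l i y)%:R)
        * ((x != i) && (y != i))%:R.
  apply: eq_bigr => x _; apply: eq_bigr => y _.
  rewrite /Afn /kap /valid /= negb_or; case: ((x != i) && (y != i)); by rewrite ?mulr1 ?mulr0.
rewrite -(sym_sum (fun k j => (e w l i k)%:R)) /dd mulr_sumr; apply: ler_sum => k _.
rewrite mulrC -sum1n mulr_sumr; apply: ler_sum => j _; rewrite mulr1.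
apply: ler_piMr => //.
by case: ifP => _; [|case: ifP => _]; rewrite ?ler01 //; case: (_ && _).
Qed.

End Ident.

Lemma expR_kap_le (R : realType) (b v1 v2 : bool) :
  expR (b%:R * (v1%:R + v2%:R)) - 1 <= (expR 2 - 1) * (b%:R * (v1%:R + v2%:R) : R).
Proof.
have h1 : (1 : R) <= expR 1 by apply: expR_ge1'.
have h2 : expR 1 <= expR (2 : R) by rewrite ler_expR ler1n.
have h2' : (1 : R) <= expR 2 by apply: le_trans h2.
case: b; case: v1; case: v2 => /=; rewrite ?mul1r ?mul0r ?addr0 ?add0r ?expR0 ?subrr ?mulr0 //.
- rewrite -[1 + 1]/(2%:R : R) mulr_natr mulr2n lerDr subr_ge0 //.
- by rewrite mulr1 lerD2r.
- by rewrite mulr1 lerD2r.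
Qed.

Section MGF.
Variables (R : realType) (L n K : nat) (g : 'I_n -> 'I_K) (Bm : 'I_L -> 'M[R]_K) (p bmax : R).
Local Notation T := ('I_L * 'I_n * 'I_n)%type.
Hypothesis Bm01 : forall l a b, 0 <= Bm l a b <= 1.
Hypothesis p01 : 0 <= p <= 1.
Hypothesis bmax0 : 0 <= bmax.
Hypothesis Bmax : forall l a b, Bm l a b <= bmax.

Definition Ex (F : Omega L n -> R) : R :=
  \sum_(w : Omega L n) (\prod_t om g Bm p t (w t)) * F w.

Lemma qv_le t : qv g Bm p t <= bmax * p.
Proof.
rewrite /qv; case: (valid t); first by rewrite ler_wpM2r //; case/andP: p01.
apply: mulr_ge0; last by case/andP: p01.
by apply: le_trans (Bmax t.1.1 (g t.1.2) (g t.2)); case/andP: (Bm01 t.1.1 (g t.1.2) (g t.2)).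
Qed.

Lemma mgf_lin (c : T -> bool) (a : R) :
  Ex (fun w => expR (\sum_t (c t)%:R * Y R (w t) - a))
    <= expR ((expR 1 - 1) * (bmax * p) * \sum_t (c t)%:R - a).
Proof.
have -> : Ex (fun w => expR (\sum_t (c t)%:R * Y R (w t) - a)) =
  \sum_(w : Omega L n) (\prod_t om g Bm p t (w t)) *
     ((fun _ => expR (- a)) w * expR (\sum_(t | ~~ xpred0 t) (fun t _ => (c t)%:R) t w * Y R (w t))).
  by apply: eq_bigr => w _; congr (_ * _); rewrite expRD mulrC.
apply: (@cond_bound R T (bool * bool)%type (false, false) (om g Bm p) _ _ xpred0 (fun _ => expR (- a)) (fun t _ => (c t)%:R) (fun _ x => Y R x)).
- exact: (om_ge0 g Bm01 p01).
- exact: om_sum1.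
- by move=> w; apply: expR_ge0.
- by [].
move=> w /=.
under eq_bigr do rewrite Et_eq.
rewrite expRD mulrC ler_wpM2r ?expR_ge0 //.
apply: le_trans (prod_Et_le g Bm01 p01 _ _) _; first by move=> t; case: (c t).
rewrite ler_expR mulr_sumr; apply: ler_sum => t _.
case: (c t) => /=; last by rewrite expR0 subrr !mulr0.
by rewrite !mulr1 mulrC ler_wpM2l ?qv_le //.
Qed.

Lemma mgf_dd l i (a : R) :
  Ex (fun w => expR (dd R w l i - a)) <= expR ((expR 1 - 1) * (bmax * p) * n%:R - a).
Proof.
have -> : Ex (fun w => expR (dd R w l i - a)) =
   Ex (fun w => expR (\sum_t ((t.1.1 == l) && valid t && ((t.1.2 == i) || (t.2 == i)))%:R * Y R (w t) - a)).
  by apply: eq_bigr => w _; rewrite ddE.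
apply: le_trans (mgf_lin _ _) _; rewrite ler_expR lerD2r.
apply: ler_wpM2l; last exact: (sum_cl R l i).
apply: mulr_ge0; first by rewrite subr_ge0 expR_ge1'.
by apply: mulr_ge0 => //; case/andP: p01.
Qed.

Lemma mgf_DD i (a : R) :
  Ex (fun w => expR (DD R w i - a)) <= expR ((expR 1 - 1) * (bmax * p) * (L%:R * n%:R) - a).
Proof.
have -> : Ex (fun w => expR (DD R w i - a)) =
   Ex (fun w => expR (\sum_t (valid t && ((t.1.2 == i) || (t.2 == i)))%:R * Y R (w t) - a)).
  by apply: eq_bigr => w _; rewrite DDE.
apply: le_trans (mgf_lin _ _) _; rewrite ler_expR lerD2r.
apply: ler_wpM2l; last exact: (sum_ci R L i).
apply: mulr_ge0; first by rewrite subr_ge0 expR_ge1'.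
by apply: mulr_ge0 => //; case/andP: p01.
Qed.

Lemma mgf_TT i (al a : R) :
  Ex (fun w => ((DD R w i <= al)%R)%:R * expR (TT R w i - a))
   <= expR ((expR 2 - 1) * (bmax * p) * (n%:R * al) - a).
Proof.
have -> : Ex (fun w => ((DD R w i <= al)%R)%:R * expR (TT R w i - a)) =
  \sum_(w : Omega L n) (\prod_t om g Bm p t (w t)) *
     (((DD R w i <= al)%R)%:R * expR (- a) *
        expR (\sum_(t | ~~ Afn i t) kap R i t w * Y R (w t))).
  by apply: eq_bigr => w _; rewrite /TT expRD; ring.
apply: (@cond_bound R T (bool * bool)%type (false, false) (om g Bm p) _ _ (Afn i)
   (fun w => ((DD R w i <= al)%R)%:R * expR (- a)) (kap R i) (fun _ x => Y R x)).
- exact: (om_ge0 g Bm01 p01).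
- exact: om_sum1.
- by move=> w; apply: mulr_ge0 => //; apply: expR_ge0.
- move=> w w' H; split; first by rewrite (DD_dep R H).
  exact: (kap_dep R H).
move=> w /=.
under eq_bigr do rewrite Et_eq.
have kap0 : forall t, 0 <= kap R i t w.
  by move=> t; rewrite /kap; apply: mulr_ge0 => //; apply: addr_ge0.
apply: le_trans (_ : ((DD R w i <= al)%R)%:R * expR (- a) *
   expR (\sum_(t | ~~ Afn i t) qv g Bm p t * (expR (kap R i t w) - 1)) <= _).
  apply: ler_wpM2l; first by apply: mulr_ge0 => //; apply: expR_ge0.
  exact: (prod_Et_le g Bm01 p01 _ kap0).
case: (boolP (DD R w i <= al)) => Hd; last by rewrite mul0r mul0r expR_ge0.
rewrite mul1r -expRD addrC ler_expR lerD2r.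
apply: le_trans (_ : \sum_(t | ~~ Afn i t) (bmax * p) * ((expR 2 - 1) * kap R i t w) <= _).
  apply: ler_sum => t _; apply: ler_pM.
  - exact: qv_ge0.
  - by rewrite subr_ge0 expR_ge1'.
  - exact: qv_le.
  - exact: expR_kap_le.
rewrite -mulr_sumr -mulr_sumr mulrA.
have E20 : 0 <= expR 2 - 1 :> R by rewrite subr_ge0 expR_ge1'.
have bp0 : 0 <= bmax * p by apply: mulr_ge0 => //; case/andP: p01.
rewrite (mulrC (bmax * p)); apply: ler_wpM2l; first exact: mulr_ge0.
apply: le_trans (sum_kap_le R w i) _.
by rewrite ler_wpM2l.
Qed.

End MGF.

Section P5sec.
Local Open Scope classical_set_scope.

Lemma wcs (R : realType) (I : finType) (m y : I -> R) : (forall j, 0 <= m j) ->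
  (\sum_j m j * y j) ^+ 2 <= (\sum_j m j) * (\sum_j m j * y j ^+ 2).
Proof.
move=> m0.
have E1 : (\sum_j m j * y j) ^+ 2 = \sum_j \sum_k m j * m k * (y j * y k).
  rewrite expr2 mulr_suml; apply: eq_bigr => j _; rewrite mulr_sumr.
  by apply: eq_bigr => k _; ring.
have E2 : (\sum_j m j) * (\sum_j m j * y j ^+ 2) = \sum_j \sum_k m j * m k * y k ^+ 2.
  rewrite mulr_suml; apply: eq_bigr => j _; rewrite mulr_sumr.
  by apply: eq_bigr => k _; ring.
have E3 : \sum_j \sum_k m j * m k * y k ^+ 2 = \sum_j \sum_k m j * m k * y j ^+ 2.
  rewrite exchange_big; apply: eq_bigr => j _; apply: eq_bigr => k _; ring.
rewrite E1 E2 -(ler_pM2l (_ : 0 < 2%:R)) //.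
have two : forall z : R, 2 * z = z + z by move=> z; ring.
rewrite [X in _ <= X]two [X in _ <= _ + X]E3 -big_split /= [X in X <= _]two -big_split /=.
apply: ler_sum => j _; rewrite -big_split -big_split /=; apply: ler_sum => k _.
have := mulr_ge0 (mulr_ge0 (m0 j) (m0 k)) (sqr_ge0 (y j - y k)).
move=> h; nra.
Qed.

Lemma sqrt_le1 (R : realType) (s : R) : 0 <= s -> Num.sqrt s <= 1 -> s <= 1.
Proof.
move=> s0 h; rewrite -(sqr_sqrtr s0) -(expr1n _ 2%N).
by rewrite ler_pXn2r ?nnegrE ?sqrtr_ge0.
Qed.

Lemma spec_le (R : realType) (n : nat) (Mx : 'M[R]_n) (r : R) :
  (forall i j, 0 <= Mx i j) -> (forall i j, Mx i j = Mx j i) ->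
  (forall i, \sum_j Mx i j <= r) -> 0 <= r -> spec_norm Mx <= r.
Proof.
move=> M0 Ms Mr r0; rewrite /spec_norm; apply: ge_sup.
  exists (vnorm (Mx *m 0)); exists 0 => //=.
  rewrite /vnorm (eq_bigr (fun _ => 0)) ?big1 ?sqrtr0 // => i _.
  by rewrite mxE expr0n.
move=> _ [x Hx <-]; rewrite /vnorm.
have sx0 : 0 <= \sum_i x i 0 ^+ 2 by apply: sumr_ge0 => i _; apply: sqr_ge0.
have sx1 : \sum_i x i 0 ^+ 2 <= 1 by apply: sqrt_le1.
rewrite -(ger0_norm r0) -sqrtr_sqr ler_sqrt ?sqr_ge0 //.
apply: le_trans (_ : \sum_i r * \sum_j Mx i j * x j 0 ^+ 2 <= _).
  apply: ler_sum => i _; rewrite mxE.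
  apply: le_trans (@wcs R _ (fun j => Mx i j) (fun j => x j 0) (M0 i)) _.
  apply: ler_wpM2r; last exact: Mr.
  by apply: sumr_ge0 => j _; apply: mulr_ge0 => //; apply: sqr_ge0.
rewrite -mulr_sumr exchange_big /=.
apply: le_trans (_ : r * \sum_j r * x j 0 ^+ 2 <= _).
  apply: ler_wpM2l => //; apply: ler_sum => j _; rewrite -mulr_suml.
  apply: ler_wpM2r; first exact: sqr_ge0.
  by apply: le_trans (Mr j); rewrite le_eqVlt; apply/orP; left; apply/eqP; apply: eq_bigr => i _; rewrite Ms.
rewrite -mulr_sumr mulrA -expr2; apply: ler_piMr => //; exact: sqr_ge0.
Qed.

Section Conn.
Variables (R : realType) (L n : nat) (p : R).
Hypothesis p0 : 0 < p.

Lemma AtildeE (w : Omega L n) l i j : Atilde p w l i j = (e w l i j)%:R / p.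
Proof.
rewrite /Atilde /Amat !mxE; case: (eqVneq i j) => [<- | ij] /=.
  by rewrite e_diag mul0r.
by rewrite /e; case: (maskS w l i j); rewrite ?andbT ?andbF ?mul0r.
Qed.

Lemma dtildeE (w : Omega L n) l i : (dtilde p w l i)%:R = dd R w l i.
Proof.
rewrite /dtilde -sum1_card natr_sum big_mkcond /=.
apply: eq_bigr => j _.
have pi0 : p^-1 != 0 by rewrite invr_eq0 gt_eqF.
have -> : (j \in [set j | Atilde p w l i j == p^-1]) = e w l i j.
  apply/idP/idP => H.
    move: H; rewrite in_setE /= AtildeE; case: (e w l i j) => //=.
    by rewrite mul0r eq_sym (negbTE pi0).
  by rewrite in_setE /= AtildeE H mul1r.
by case: (e w l i j).
Qed.
End Conn.

End P5sec.

Lemma term_le_sum (R : realType) (I : finType) (F : I -> R) k :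
  (forall i, 0 <= F i) -> F k <= \sum_i F i.
Proof. by move=> F0; rewrite (bigD1 k) //= lerDl; apply: sumr_ge0. Qed.

Lemma le_addl' (R : realType) (x y z : R) : 0 <= y -> x <= z -> x <= z + y.
Proof. by move=> y0 xz; apply: le_trans xz _; rewrite lerDl. Qed.
Lemma le_addr' (R : realType) (x y z : R) : 0 <= y -> x <= z -> x <= y + z.
Proof. by move=> y0 xz; apply: le_trans xz _; rewrite lerDr. Qed.

Lemma sum_const_ord (R : realType) (m : nat) (x : R) : \sum_(i < m) x = m%:R * x.
Proof. by rewrite sumr_const card_ord mulr_natl. Qed.

Section Core.
Variables (R : realType) (L n K : nat) (g : 'I_n -> 'I_K) (Bm : 'I_L -> 'M[R]_K) (p bmax : R).
Local Notation T := ('I_L * 'I_n * 'I_n)%type.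
Hypothesis Bm01 : forall l a b, 0 <= Bm l a b <= 1.
Hypothesis p01 : 0 <= p <= 1.
Hypothesis bmax0 : 0 <= bmax.
Hypothesis Bmax : forall l a b, Bm l a b <= bmax.

Local Notation Ex := (Ex g Bm p).

Lemma W_ge0 (w : Omega L n) : 0 <= \prod_t om g Bm p t (w t).
Proof. by apply: prodr_ge0 => t _; apply: (om_ge0 g Bm01 p01). Qed.

Lemma Ex_le F G : (forall w, F w <= G w) -> Ex F <= Ex G.
Proof. by move=> H; apply: ler_sum => w _; apply: ler_wpM2l; [apply: W_ge0 | apply: H]. Qed.

Lemma Ex_1m F : Ex (fun w => 1 - F w) = 1 - Ex F.
Proof.
rewrite /Ex.
under eq_bigr do rewrite mulrBr mulr1.
by rewrite sumrB (W_sum1 (om_sum1 g Bm p)).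
Qed.

Lemma Ex_add F G : Ex (fun w => F w + G w) = Ex F + Ex G.
Proof. by rewrite /Ex -big_split; apply: eq_bigr => w _; rewrite mulrDr. Qed.

Lemma Ex_sum (I : finType) (F : I -> Omega L n -> R) :
  Ex (fun w => \sum_i F i w) = \sum_i Ex (F i).
Proof.
rewrite /Ex exchange_big; apply: eq_bigr => w _; by rewrite mulr_sumr.
Qed.

Variables (ta tb tc : R).

Definition Good (w : Omega L n) : bool :=
  [&& [forall l, forall i, dd R w l i <= ta], [forall i, DD R w i <= tb] &
      [forall i, SS R w i <= tb + tc]].

Definition Bad (w : Omega L n) : R :=
  \sum_l \sum_i expR (dd R w l i - ta) + \sum_i expR (DD R w i - tb) +
  \sum_i ((DD R w i <= tb)%R)%:R * expR (TT R w i - tc).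

Lemma Bad_ge0 w : 0 <= Bad w.
Proof.
rewrite /Bad; apply: addr_ge0; first apply: addr_ge0.
- by apply: sumr_ge0 => l _; apply: sumr_ge0 => i _; apply: expR_ge0.
- by apply: sumr_ge0 => i _; apply: expR_ge0.
- by apply: sumr_ge0 => i _; apply: mulr_ge0 => //; apply: expR_ge0.
Qed.

Lemma Good_ge w : 1 - Bad w <= (Good w)%:R.
Proof.
case: (boolP (Good w)) => Gw; first by rewrite lerBlDr lerDl Bad_ge0.
rewrite subr_le0.
have t1 : forall l i, expR (dd R w l i - ta) <= Bad w.
  move=> l i; rewrite /Bad -addrA; apply: le_addl'.
    apply: addr_ge0; first by apply: sumr_ge0 => j _; apply: expR_ge0.
    by apply: sumr_ge0 => j _; apply: mulr_ge0 => //; apply: expR_ge0.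
  apply: le_trans (@term_le_sum R _ (fun j => expR (dd R w l j - ta)) i _) _.
    by move=> j; apply: expR_ge0.
  apply: (@term_le_sum R _ (fun l' => \sum_j expR (dd R w l' j - ta)) l) => l'.
  by apply: sumr_ge0 => j _; apply: expR_ge0.
have t2 : forall i, expR (DD R w i - tb) <= Bad w.
  move=> i; rewrite /Bad; apply: le_addl'.
    by apply: sumr_ge0 => j _; apply: mulr_ge0 => //; apply: expR_ge0.
  apply: le_addr'.
    by apply: sumr_ge0 => l _; apply: sumr_ge0 => j _; apply: expR_ge0.
  by apply: term_le_sum => j; apply: expR_ge0.
have t3 : forall i, ((DD R w i <= tb)%R)%:R * expR (TT R w i - tc) <= Bad w.
  move=> i; rewrite /Bad; apply: le_addr'; first by apply: addr_ge0;
    [apply: sumr_ge0 => l _; apply: sumr_ge0 => j _; apply: expR_ge0 |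
     apply: sumr_ge0 => j _; apply: expR_ge0].
  by apply: term_le_sum => j; apply: mulr_ge0 => //; apply: expR_ge0.
move: Gw; rewrite /Good; case/nandP => [/forallPn [l /forallPn [i]] | /nandP [/forallPn [i] | /forallPn [i]]].
- rewrite -ltNge => h; apply: le_trans (t1 l i); apply: expR_ge1'.
  by rewrite subr_ge0 ltW.
- rewrite -ltNge => h; apply: le_trans (t2 i); apply: expR_ge1'.
  by rewrite subr_ge0 ltW.
- rewrite -ltNge => h.
  case: (boolP (DD R w i <= tb)%R) => hD; last first.
    apply: le_trans (t2 i); apply: expR_ge1'; rewrite subr_ge0 ltW //.
    by rewrite ltNge.
  apply: le_trans (t3 i); rewrite hD mul1r; apply: expR_ge1'.
  rewrite subr_ge0; have := SS_le R w i => hS.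
  apply: ltW; rewrite -(ltrD2l tb); apply: lt_le_trans h _.
  by apply: le_trans hS _; rewrite lerD2r.
Qed.

Lemma core :
  1 - (L%:R * (n%:R * expR ((expR 1 - 1) * (bmax * p) * n%:R - ta))
       + n%:R * expR ((expR 1 - 1) * (bmax * p) * (L%:R * n%:R) - tb)
       + n%:R * expR ((expR 2 - 1) * (bmax * p) * (n%:R * tb) - tc))
  <= Ex (fun w => (Good w)%:R).
Proof.
apply: le_trans (Ex_le Good_ge); rewrite Ex_1m lerB //.
rewrite /Bad Ex_add Ex_add !Ex_sum.
apply: lerD; first apply: lerD.
- rewrite -(sum_const_ord L).
  apply: ler_sum => l _; rewrite Ex_sum -(sum_const_ord n).
  by apply: ler_sum => i _; apply: (mgf_dd g Bm01 p01 bmax0 Bmax).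
- rewrite -(sum_const_ord n).
  by apply: ler_sum => i _; apply: (mgf_DD g Bm01 p01 bmax0 Bmax).
- rewrite -(sum_const_ord n).
  by apply: ler_sum => i _; apply: (mgf_TT g Bm01 p01 bmax0 Bmax).
Qed.
End Core.

Lemma e_sym (L n : nat) (w : Omega L n) l i j : e w l i j = e w l j i.
Proof. by rewrite /e /adjA /maskS; case: ltngtP => //. Qed.

Lemma event_of_good (R : realType) (L n : nat) (p : R) (w : Omega L n) (ta tb tc C lam ell : R) :
  0 < p -> 0 <= ta -> ta <= C * ell -> tb <= C * lam -> (tb + tc) / p ^+ 2 <= C * (lam / p ^+ 2) ->
  0 <= tb + tc ->
  Good ta tb tc w ->
  [&& [forall l : 'I_L, [forall i : 'I_n,
             (dtilde p w l i)%:R <= C * ell]],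
          [forall i : 'I_n,
             (\sum_(l < L) dtilde p w l i)%:R <= C * lam] &
          spec_norm (\sum_(l < L) (Atilde p w l *m Atilde p w l))
             <= C * (lam / p ^+ 2)].
Proof.
move=> p0 ta0 hta htb htc tbc0 /and3P [/forallP H1 /forallP H2 /forallP H3].
apply/and3P; split.
- apply/forallP => l; apply/forallP => i; rewrite (dtildeE p0).
  by move/forallP: (H1 l) => /(_ i) h; apply: le_trans h hta.
- apply/forallP => i; rewrite natr_sum.
  under eq_bigr do rewrite (dtildeE p0).
  by apply: le_trans (H2 i) htb.
apply: le_trans htc.
have entry : forall i j, (\sum_(l < L) (Atilde p w l *m Atilde p w l)) i j =
   \sum_l \sum_k (e w l i k)%:R * (e w l k j)%:R / p ^+ 2.
  move=> i j; rewrite summxE; apply: eq_bigr => l _; rewrite mxE.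
  apply: eq_bigr => k _; rewrite !AtildeE -exprVn; ring.
have pp0 : 0 < p ^+ 2 by rewrite exprn_gt0.
apply: spec_le.
- move=> i j; rewrite entry; apply: sumr_ge0 => l _; apply: sumr_ge0 => k _.
  by apply: divr_ge0; [apply: mulr_ge0 | apply: ltW].
- move=> i j; rewrite !entry; apply: eq_bigr => l _; apply: eq_bigr => k _.
  by rewrite (e_sym w l j k) (e_sym w l k i) (mulrC (e w l k j)%:R).
- move=> i; apply: le_trans (_ : SS R w i / p ^+ 2 <= _); last first.
    by rewrite ler_pM2r ?invr_gt0 //; apply: H3.
  rewrite le_eqVlt; apply/orP; left; apply/eqP.
  under eq_bigr do rewrite entry.
  rewrite /SS mulr_suml exchange_big; apply: eq_bigr => l _.
  rewrite mulr_suml exchange_big; apply: eq_bigr => k _.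
  by rewrite mulr_suml; apply: eq_bigr => j _.
- by apply: divr_ge0 => //; apply: ltW.
Qed.

Theorem lemma1 :
  forall (R : realType) (K : nat) (M c1 c2 : R),
    0 < M -> 0 < c1 -> 0 < c2 ->
  exists C C0 c : R, [/\ 0 < C, 0 < C0, 0 < c &
  forall (n L : nat) (p rho : R) (g : 'I_n -> 'I_K) (B0 : 'I_L -> 'M[R]_K),
    (0 < n)%N -> (0 < L)%N -> 0 < p -> p <= 1 ->
    (forall l, (B0 l)^T = B0 l) ->
    (forall l a b, 0 <= B0 l a b <= M) ->
    (forall l a b, 0 <= rho * B0 l a b <= 1) ->
    c1 * ln (L + n)%:R / (p * n%:R * Num.sqrt L%:R) <= rho ->
    rho <= c2 / (p * n%:R) ->
    1 - C0 * powR (L + n)%:R (- c) <=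
    sbm_prob g (fun l => rho *: B0 l) p (fun w =>
      [&& [forall l : 'I_L, [forall i : 'I_n,
             (dtilde p w l i)%:R <= C * ln (L + n)%:R]],
          [forall i : 'I_n,
             (\sum_(l < L) dtilde p w l i)%:R <= C * (L%:R * n%:R * rho * p)] &
          spec_norm (\sum_(l < L) (Atilde p w l *m Atilde p w l))
             <= C * (L%:R * n%:R * rho / p)])].
Proof.
move=> R K M c1 c2 M0 c10 c20.
have e10 : 0 <= expR 1 - 1 :> R by rewrite subr_ge0 expR_ge1'.
have E20 : 0 <= expR 2 - 1 :> R by rewrite subr_ge0 expR_ge1'.
have ic10 : 0 < 3 / c1 by rewrite divr_gt0.
pose Cb := (expR 1 - 1) * M + 3 / c1.
have Cb0 : 0 < Cb by rewrite /Cb ltr_wpDl // mulr_ge0 // ltW.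
pose Ct := (expR 2 - 1) * M * c2 * Cb + 3 / c1.
have Ct0 : 0 < Ct by rewrite /Ct ltr_wpDl // mulr_ge0 // ?mulr_ge0 // ltW.
exists (4 + Cb + Ct), (expR ((expR 1 - 1) * M * c2) + 2), 2.
split => //.
- by apply: addr_gt0 => //; apply: addr_gt0.

move=> n L p rho g B0 n0 L0 p0 p1 Bsym B0M rhoB hlo hhi.
set N := (L + n)%:R : R.
set ell := ln N.
have N1 : 1 < N by rewrite /N ltr1n -[2%N]/(1 + 1)%N leq_add.
have Npos : N \is Num.pos by rewrite posrE (lt_trans ltr01 N1).
have ell0 : 0 < ell by rewrite /ell ln_gt0.
have eN : expR ell = N by rewrite /ell lnK.
have Lr1 : 1 <= L%:R :> R by rewrite ler1n.
have nr1 : 1 <= n%:R :> R by rewrite ler1n.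
have sL1 : 1 <= Num.sqrt (L%:R : R).
  by apply: le_trans (_ : Num.sqrt 1 <= _); [rewrite sqrtr1 | rewrite ler_sqrt // (le_trans ler01 Lr1)].
have sLL : Num.sqrt (L%:R : R) <= L%:R.
  have L0r : 0 <= L%:R :> R by apply: le_trans Lr1.
  rewrite -{2}(sqr_sqrtr L0r) expr2; by apply: ler_peMr; rewrite ?sqrtr_ge0.
have pn0 : 0 < p * n%:R by rewrite mulr_gt0 // (lt_le_trans ltr01 nr1).
have D0 : 0 < p * n%:R * Num.sqrt L%:R by rewrite mulr_gt0 // (lt_le_trans ltr01 sL1).
have rho0 : 0 < rho.
  apply: lt_le_trans hlo; rewrite divr_gt0 // mulr_gt0 //.
have hmu : rho * (p * n%:R) <= c2 by rewrite -ler_pdivlMr.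
pose Lam := L%:R * n%:R * rho * p.
have hLam : c1 * ell <= Lam.
  move: hlo; rewrite ler_pdivrMr // => h; apply: le_trans h _.
  rewrite /Lam; have -> : L%:R * n%:R * rho * p = rho * (p * n%:R * L%:R) by ring.
  apply: ler_wpM2l; first exact: ltW.
  by apply: ler_wpM2l; [exact: ltW pn0 | exact: sLL].
have Lam0 : 0 <= Lam by apply: le_trans hLam; rewrite mulr_ge0 // ltW.
have h3 : 3 * ell <= 3 / c1 * Lam.
  rewrite -mulrA (mulrC c1^-1); apply: ler_wpM2l => //; rewrite ler_pdivlMr // mulrC.
  exact: hLam.
pose Bm := fun l => rho *: B0 l.
have Bm01 : forall l a b, 0 <= Bm l a b <= 1 by move=> l a b; rewrite mxE; apply: rhoB.
have p01 : 0 <= p <= 1 by rewrite p1 ltW.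
have bmax0 : 0 <= rho * M by rewrite mulr_ge0 // ltW.
have Bmax : forall l a b, Bm l a b <= rho * M.
  move=> l a b; rewrite mxE; apply: ler_wpM2l; first exact: ltW.
  by case/andP: (B0M l a b).
have HC := core g Bm01 p01 bmax0 Bmax (4 * ell) (Cb * Lam) (Ct * Lam).
have M0' : 0 <= M by apply: ltW.
have Bsum_le : L%:R * (n%:R * expR ((expR 1 - 1) * (rho * M * p) * n%:R - 4 * ell))
   + n%:R * expR ((expR 1 - 1) * (rho * M * p) * (L%:R * n%:R) - Cb * Lam)
   + n%:R * expR ((expR 2 - 1) * (rho * M * p) * (n%:R * (Cb * Lam)) - Ct * Lam)
   <= (expR ((expR 1 - 1) * M * c2) + 2) * powR N (- 2).
  have pw : powR N (-2) = expR (- (2 * ell)).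
    by rewrite /powR gt_eqF ?(lt_trans ltr01 N1) // mulNr.
  have nN : n%:R <= expR ell by rewrite eN /N ler_nat leq_addl.
  have LnN : L%:R * n%:R <= expR (ell + ell).
    by rewrite expRD eN /N -!natrM ler_nat leq_mul ?leq_addr ?leq_addl.
  rewrite pw [X in _ <= X]mulrDl.
  have P1 : L%:R * (n%:R * expR ((expR 1 - 1) * (rho * M * p) * n%:R - 4 * ell))
         <= expR ((expR 1 - 1) * M * c2) * expR (- (2 * ell)).
    rewrite mulrA; apply: le_trans (ler_wpM2r (expR_ge0 _) LnN) _.
    rewrite -!expRD ler_expR.
    have -> : (expR 1 - 1) * (rho * M * p) * n%:R = ((expR 1 - 1) * M) * (rho * (p * n%:R)) by ring.
    have := ler_wpM2l (mulr_ge0 e10 M0') hmu; lra.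
  have P2 : n%:R * expR ((expR 1 - 1) * (rho * M * p) * (L%:R * n%:R) - Cb * Lam) <= expR (- (2 * ell)).
    apply: le_trans (ler_wpM2r (expR_ge0 _) nN) _.
    rewrite -!expRD ler_expR.
    have -> : (expR 1 - 1) * (rho * M * p) * (L%:R * n%:R) - Cb * Lam = - (3 / c1 * Lam) by rewrite /Cb /Lam; ring.
    move: h3; lra.
  have P3 : n%:R * expR ((expR 2 - 1) * (rho * M * p) * (n%:R * (Cb * Lam)) - Ct * Lam) <= expR (- (2 * ell)).
    apply: le_trans (ler_wpM2r (expR_ge0 _) nN) _.
    rewrite -!expRD ler_expR.
    have -> : (expR 2 - 1) * (rho * M * p) * (n%:R * (Cb * Lam)) = ((expR 2 - 1) * M * Cb * Lam) * (rho * (p * n%:R)) by ring.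
    have := ler_wpM2l (mulr_ge0 (mulr_ge0 (mulr_ge0 E20 M0') (ltW Cb0)) Lam0) hmu.
    rewrite /Ct; lra.
  lra.
have eqLam : L%:R * n%:R * rho / p = Lam / p ^+ 2.
  by rewrite /Lam expr2 invfM !mulrA mulfK ?gt_eqF.
rewrite eqLam.
apply: le_trans (le_trans _ HC) _.
  by rewrite lerD2l lerN2.
apply: (Ex_le g Bm01 p01) => w.
have ell0' : 0 <= ell by apply: ltW.
have := @event_of_good R L n p w (4 * ell) (Cb * Lam) (Ct * Lam) (4 + Cb + Ct) Lam ell p0.
case: (Good (4 * ell) (Cb * Lam) (Ct * Lam) w); last by move=> _; rewrite ler0n.
have hb1 := mulr_ge0 (ltW Cb0) ell0'.
have hb2 := mulr_ge0 (ltW Ct0) ell0'.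
have hb3 := mulr_ge0 (ltW Cb0) Lam0.
have hb4 := mulr_ge0 (ltW Ct0) Lam0.
move=> H; rewrite H //.
- by rewrite mulr_ge0.
- lra.
- lra.
- rewrite mulrA; apply: ler_wpM2r; first by rewrite invr_ge0 exprn_ge0 // ltW.
  lra.
- lra.
Qed.
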